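(* Let $G$ be a graph that is well-separable with respect to a set $\mathcal P$ of principal $k$-profiles, let $P,P'\in\mathcal P$ and let $(A,B)\in\mathcal R_{\rm eff}(P,P')$. Then there is a component $X$ of $G[A\setminus B]$ such that $(X\cup N(X),V(G)\setminus X)\in\mathcal R_{\rm eff}(P,P')$.
   Context: A separation of $G$ is an ordered pair $(A,B)$ of subsets of $V(G)$ with $A\cup B=V(G)$ and no edge between $A\setminus B$ and $B\setminus A$; its order is $|A\cap B|$. $(A,B)\le(C,D)$ means $A\subseteq C$, $D\subseteq B$. A profile is a set $P$ of separations with (P1) if $(C,D)\le(A,B)\in P$ then $(D,C)\notin P$, and (P2) if $(A,B),(C,D)\in P$ then $(B\cap D,A\cup C)\notin P$. $P$ is principal if for every family $((A_i,B_i))_{i\in I}$ in $P$ with all $A_i\cap B_i$ equal, $\bigcap_{i\in I}(B_i\setminus A_i)\neq\emptyset$. $P$ is a $k$-profile if all its separations have order $<k$ and for each separation $(A,B)$ of order $<k$, $(A,B)\in P$ or $(B,A)\in P$. A separation $(A,B)$ distinguishes $P,P'$ if $(A,B)\in P,(B,A)\in P'$ or vice versa, efficiently if no separation of smaller order distinguishes them. $\kappa(\mathcal P,G)$ is the minimum order of a separation distinguishing two profiles of $\mathcal P$. $\mathcal R_{\rm eff}(P,P')$ is the set of separations of order $\kappa(\mathcal P,G)$ distinguishing $P$ and $P'$ efficiently. $\mathcal R(k,\mathcal P,G)$ is the set of separations of finite order at most $k$ distinguishing two profiles of $\mathcal P$. A component $C$ of $G-(A\cap B)$ is degenerated if $N(C)\subsetneq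 A\cap B$. $G$ is well-separable with respect to $\mathcal P$ if for no separation $(A,B)\in\mathcal R(\kappa(\mathcal P,G),\mathcal P,G)$ does $G-(A\cap B)$ have a degenerated component (the paper phrases this as: for every separation of order $\kappa(\mathcal P,G)$ no component of $G-(A\cap B)$ is degenerated, that is, the set of separations $(C\cup N(C),V(G)\setminus C)$ with $C$ a degenerated component for a separation in $\mathcal R(\kappa(\mathcal P,G),\mathcal P,G)$ is empty). *)

(* Defs.v *)
From Stdlib Require Import List Arith Relations.
Import ListNotations.

Section Defs.
Variable V : Type.
Variable E : V -> V -> Prop.

Definition vset := V -> Prop.
Definition sep := (vset * vset)%type.

Definition has_card (S : vset) (n : nat) : Prop :=
  exists l : list V, NoDup l /\ (forall x, S x <-> In x l) /\ length l = n.

Definition sepI (s : sep) : vset := fun x => fst s x /\ snd s x.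

Definition order_is (s : sep) (n : nat) : Prop := has_card (sepI s) n.

Definition is_separation (s : sep) : Prop :=
  (forall x, fst s x \/ snd s x) /\
  (forall x y, fst s x -> ~ snd s x -> snd s y -> ~ fst s y -> ~ E x y).

Definition sep_le (s t : sep) : Prop :=
  (forall x, fst s x -> fst t x) /\ (forall x, snd t x -> snd s x).

Definition flip (s : sep) : sep := (snd s, fst s).

Definition is_profile (P : sep -> Prop) : Prop :=
  (forall s, P s -> is_separation s) /\
  (forall s t, is_separation s -> sep_le s t -> P t -> ~ P (flip s)) /\
  (forall s t, P s -> P t ->
     ~ P ((fun x => snd s x /\ snd t x), (fun x => fst s x \/ fst t x))).

Definition is_principal (P : sep -> Prop) : Prop :=
  forall (I : Type) (f : I -> sep),
    (forall i, P (f i)) ->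
    (forall i j x, sepI (f i) x <-> sepI (f j) x) ->
    exists x, forall i, snd (f i) x /\ ~ fst (f i) x.

Definition is_k_profile (k : nat) (P : sep -> Prop) : Prop :=
  is_profile P /\
  (forall s, P s -> exists n, order_is s n /\ n < k) /\
  (forall s, is_separation s -> (exists n, order_is s n /\ n < k) ->
     P s \/ P (flip s)).

Definition distinguishes (s : sep) (P P' : sep -> Prop) : Prop :=
  is_separation s /\ ((P s /\ P' (flip s)) \/ (P (flip s) /\ P' s)).

Definition distinguishes_eff (s : sep) (P P' : sep -> Prop) : Prop :=
  distinguishes s P P' /\
  exists n, order_is s n /\
    forall t m, order_is t m -> m < n -> ~ distinguishes t P P'.

Definition is_kappa (Ps : (sep -> Prop) -> Prop) (n : nat) : Prop :=
  (exists s P P', Ps P /\ Ps P' /\ distinguishes s P P' /\ order_is s n) /\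
  (forall s P P' m, Ps P -> Ps P' -> distinguishes s P P' -> order_is s m ->
     n <= m).

Definition R_eff (Ps : (sep -> Prop) -> Prop) (P P' : sep -> Prop) (s : sep)
  : Prop :=
  exists n, is_kappa Ps n /\ order_is s n /\ distinguishes_eff s P P'.

Definition R_set (k : nat) (Ps : (sep -> Prop) -> Prop) (s : sep) : Prop :=
  (exists n, order_is s n /\ n <= k) /\
  exists P P', Ps P /\ Ps P' /\ distinguishes s P P'.

Definition nbh (C : vset) : vset :=
  fun v => ~ C v /\ exists u, C u /\ E u v.

Definition is_component (Y C : vset) : Prop :=
  (exists x, C x) /\
  (forall x, C x -> Y x) /\
  (forall x y, C x -> C y ->
     clos_refl_trans V (fun u w => C u /\ C w /\ E u w) x y) /\
  (forall x y, C x -> Y y -> E x y -> C y).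

Definition degenerated (S C : vset) : Prop :=
  is_component (fun v => ~ S v) C /\
  (forall v, nbh C v -> S v) /\ (exists v, S v /\ ~ nbh C v).

Definition well_separable (Ps : (sep -> Prop) -> Prop) : Prop :=
  forall n, is_kappa Ps n ->
    forall s, R_set n Ps s -> forall C, ~ degenerated (sepI s) C.

End Defs.

(* Main.v *)
Require Import Defs.
From Stdlib Require Import List Arith Relations Classical.

Section Aux.
Variable V : Type.
Variable E : V -> V -> Prop.

Lemma has_card_ext (S T : vset V) n : (forall x, S x <-> T x) -> has_card V S n -> has_card V T n.
Proof. intros H [l [Hn [Hi Hl]]]. exists l. split; [|split]; auto. intro x. rewrite <- H. apply Hi. Qed.

Lemma has_card_uniq (S : vset V) n m : has_card V S n -> has_card V S m -> n = m.
Proof.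
  intros [l1 [N1 [I1 L1]]] [l2 [N2 [I2 L2]]]. subst.
  apply Nat.le_antisymm; apply NoDup_incl_length; auto; intros x Hx;
  [apply I2, I1 | apply I1, I2]; auto.
Qed.

Definition sX (X : vset V) : sep V := ((fun v => X v \/ nbh V E X v), (fun v => ~ X v)).

Lemma crt_sym (R : V -> V -> Prop) : (forall a b, R a b -> R b a) ->
  forall a b, clos_refl_trans V R a b -> clos_refl_trans V R b a.
Proof.
  intros HR a b H. induction H.
  - apply rt_step; auto.
  - apply rt_refl.
  - eapply rt_trans; eauto.
Qed.

Lemma comp_exists (Esym : forall x y, E x y -> E y x) (Y : vset V) x :
  Y x -> exists X, is_component V E Y X /\ X x.
Proof.
  intros Yx.
  set (R' := fun u w => Y u /\ Y w /\ E u w).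
  set (C := fun y => clos_refl_trans V R' x y).
  exists C.
  assert (CY : forall y, C y -> Y y).
  { intros y H. unfold C in H. apply clos_rt_rtn1 in H. induction H; auto.
    destruct H as [_ [? _]]; auto. }
  assert (Hfw : forall y, C y -> clos_refl_trans V (fun u w => C u /\ C w /\ E u w) x y).
  { intros y H. unfold C in H.
    induction (clos_rt_rtn1 _ _ _ _ H) as [|u w Hr Hrt IH].
    - apply rt_refl.
    - assert (Cu : C u) by (apply clos_rtn1_rt; auto).
      apply rt_trans with u.
      + apply IH. exact Cu.
      + apply rt_step. split; [exact Cu|split; [|destruct Hr as [_ [_ ?]]; auto]].
        unfold C. apply rt_trans with u; auto. apply rt_step; auto. }
  split; [split; [|split; [|split]]|].
  - exists x. apply rt_refl.
  - exact CY.
  - intros y z Hy Hz. apply rt_trans with x.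
    + apply crt_sym; [|apply Hfw; auto]. intros a b [? [? ?]]; auto.
    + apply Hfw; auto.
  - intros y z Hy Hz He. unfold C. apply rt_trans with y; auto.
    apply rt_step. unfold R'. auto.
  - apply rt_refl.
Qed.

Lemma principal_pick (Esym : forall x y, E x y -> E y x)
  (Q : sep V -> Prop) (A B : vset V) k :
  is_k_profile V E k Q -> is_principal V Q -> Q (B, A) ->
  (forall X, is_component V E (fun v => A v /\ ~ B v) X ->
     is_separation V E (sX X) /\ (exists n, order_is V (sX X) n /\ n < k) /\
     (forall x, sepI V (sX X) x <-> A x /\ B x)) ->
  exists X, is_component V E (fun v => A v /\ ~ B v) X /\ Q (flip V (sX X)).
Proof.
  intros Hk Hpr HBA HX.
  apply NNPP; intro Hno.
  assert (Hall : forall X, is_component V E (fun v => A v /\ ~ B v) X -> Q (sX X)).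
  { intros X HcX. destruct (HX X HcX) as [Hs [Ho _]]. destruct Hk as [_ [_ Hk3]].
    destruct (Hk3 _ Hs Ho); auto. exfalso; apply Hno; eauto. }
  set (I := option {X | is_component V E (fun v => A v /\ ~ B v) X}).
  set (f := fun i : I => match i with None => (B, A) | Some X => sX (proj1_sig X) end).
  assert (Hs : forall i y, sepI V (f i) y <-> A y /\ B y).
  { intros [[X HcX]|] y; simpl. apply (HX X HcX). unfold sepI; simpl; tauto. }
  destruct (Hpr I f) as [x Hx].
  - intros [[X HcX]|]; simpl; auto.
  - intros i j y. rewrite Hs, Hs. tauto.
  - destruct (Hx None) as [HAx HBx]. simpl in HAx, HBx.
    destruct (comp_exists Esym (fun v => A v /\ ~ B v) x (conj HAx HBx)) as [X [HcX HXx]].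
    destruct (Hx (Some (exist _ X HcX))) as [H1 _]. simpl in H1. exact (H1 HXx).
Qed.

End Aux.

Theorem lemma2p7 (V : Type) (E : V -> V -> Prop)
  (Esym : forall x y, E x y -> E y x) (Eirr : forall x, ~ E x x)
  (k : nat) (Ps : (sep V -> Prop) -> Prop)
  (HPs : forall P, Ps P -> is_k_profile V E k P /\ is_principal V P)
  (Hws : well_separable V E Ps)
  (P P' : sep V -> Prop) (HP : Ps P) (HP' : Ps P')
  (A B : vset V) (HAB : R_eff V E Ps P P' (A, B)) :
  exists X : vset V,
    is_component V E (fun v => A v /\ ~ B v) X /\
    R_eff V E Ps P P' ((fun v => X v \/ nbh V E X v), (fun v => ~ X v)).
Proof.
  destruct HAB as [n [Hkap [HoAB Heff]]].
  pose proof Heff as [Hdis [n' [Hon' Hmin]]].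
  pose proof Hdis as [HsepAB Hor].
  destruct (HPs P HP) as [HkP HprP].
  destruct (HPs P' HP') as [HkP' HprP'].
  assert (Hcomp : forall X, is_component V E (fun v => A v /\ ~ B v) X ->
    is_separation V E (sX V E X) /\ (forall x, sepI V (sX V E X) x <-> A x /\ B x)
    /\ sep_le V (sX V E X) (A, B)).
  { intros X HcX.
    pose proof HsepAB as [Hcov Hedge]. simpl in Hcov, Hedge.
    pose proof HcX as [Hne [HXY [Hconn Hcl]]].
    assert (Hcl2 : forall x y, X x -> ~ (A y /\ B y) -> E x y -> X y).
    { intros x y Hx Hy He. apply Hcl with x; auto.
      destruct (HXY x Hx) as [HAx HBx].
      destruct (classic (A y)) as [HAy|HAy].
      - split; auto.
      - exfalso. destruct (Hcov y) as [?|HBy]; [contradiction|].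
        exact (Hedge x y HAx HBx HBy HAy He). }
    assert (Nsub : forall v, nbh V E X v -> A v /\ B v).
    { intros v [HnX [u [Hu He]]]. apply NNPP; intro Hn. apply HnX. eauto. }
    assert (HcS : is_component V E (fun v => ~ sepI V (A, B) v) X).
    { split; [exact Hne|split; [|split; [exact Hconn|]]].
      - intros x Hx [H1 H2]. simpl in H1, H2. destruct (HXY x Hx); contradiction.
      - intros x y Hx Hy He. apply (Hcl2 x y); auto. }
    assert (Hnd := Hws n Hkap (A, B)
       (conj (ex_intro _ n (conj HoAB (le_n n)))
             (ex_intro _ P (ex_intro _ P' (conj HP (conj HP' Hdis))))) X).
    assert (Hall : forall v, A v /\ B v -> nbh V E X v).
    { intros v Hv. apply NNPP; intro Hn. apply Hnd.
      split; [exact HcS|split].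
      - intros w Hw. exact (Nsub w Hw).
      - exists v. split; auto. }
    split; [|split].
    - split.
      + intro x; simpl. destruct (classic (X x)); auto.
      + intros x y Hx Hnx Hy Hny He. simpl in *. apply Hny; right.
        split; auto. exists x. split; auto. apply NNPP; auto.
    - intro x. unfold sepI, sX; simpl. split.
      + intros [[Hx|Hx] Hnx]; [contradiction|]. apply Nsub; auto.
      + intros Hs. pose proof (Hall x Hs) as Hn. split; [right; auto|].
        destruct Hn; auto.
    - split; simpl.
      + intros x [Hx|Hx]. apply HXY; auto. apply Nsub; auto.
      + intros x HBx HXx. destruct (HXY x HXx); contradiction. }
  assert (Hnk : n < k).
  { destruct HkP as [_ [Hk2 _]].
    destruct Hor as [[H1 _]|[H1 _]]; destruct (Hk2 _ H1) as [m [Hm Hmk]].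
    - rewrite (has_card_uniq V _ _ _ HoAB Hm); auto.
    - assert (Hm' : order_is V (A, B) m).
      { unfold order_is. apply has_card_ext with (sepI V (flip V (A, B))); auto.
        intro x; unfold sepI; simpl; tauto. }
      rewrite (has_card_uniq V _ _ _ HoAB Hm'); auto. }
  assert (Hord : forall X, is_component V E (fun v => A v /\ ~ B v) X ->
     forall m, order_is V (A, B) m -> order_is V (sX V E X) m).
  { intros X HcX m Hm. unfold order_is. apply has_card_ext with (sepI V (A, B)); auto.
    intro x. destruct (Hcomp X HcX) as [_ [Hi _]]. rewrite Hi. unfold sepI; simpl; tauto. }
  assert (HX : forall X, is_component V E (fun v => A v /\ ~ B v) X ->
     is_separation V E (sX V E X) /\ (exists n, order_is V (sX V E X) n /\ n < k) /\
     (forall x, sepI V (sX V E X) x <-> A x /\ B x)).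
  { intros X HcX. destruct (Hcomp X HcX) as [H1 [H2 _]]. split; auto. split; auto.
    exists n; split; auto. }
  assert (Horient : forall Q, is_k_profile V E k Q -> Q (A, B) ->
     forall X, is_component V E (fun v => A v /\ ~ B v) X -> Q (sX V E X)).
  { intros Q [[_ [Hp1 _]] [_ Hk3]] HQ X HcX.
    destruct (Hcomp X HcX) as [Hs [_ Hle]].
    destruct (Hk3 _ Hs) as [?|Hf]; auto.
    - exists n; split; auto.
    - exfalso. exact (Hp1 _ _ Hs Hle HQ Hf). }
  assert (Hfin : exists X, is_component V E (fun v => A v /\ ~ B v) X /\
      distinguishes V E (sX V E X) P P').
  { destruct Hor as [[H1 H2]|[H1 H2]].
    - destruct (principal_pick V E Esym P' A B k HkP' HprP' H2 HX) as [X [HcX Hf]].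
      exists X. split; auto. split; [apply Hcomp; auto|]. left. split; [apply (Horient P HkP H1 X HcX)|exact Hf].
    - destruct (principal_pick V E Esym P A B k HkP HprP H1 HX) as [X [HcX Hf]].
      exists X. split; auto. split; [apply Hcomp; auto|]. right. split; [exact Hf|apply (Horient P' HkP' H2 X HcX)]. }
  destruct Hfin as [X [HcX Hd]].
  exists X. split; auto.
  change (R_eff V E Ps P P' (sX V E X)).
  exists n. split; auto. split; [apply Hord; auto|].
  split; [exact Hd|]. exists n'. split; [apply Hord; auto | exact Hmin].
Qed.
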